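(* Let $\tau\in\mathbb N$ and let $f:\mathbb Z_+\times\mathbb R\to\mathbb R$, continuous in $x$, satisfy: (1) $f$ is asymptotically $\tau$-periodic in $t$ uniformly with respect to $x$ on compact subsets of $\mathbb R$; (2) every $g\in H^+(f)$ is strictly increasing in $x$: $v_1<v_2$ implies $g(t,v_1)<g(t,v_2)$ for all $t\in\mathbb Z_+$; (3) the solution $\varphi(t,u_0,f)$ of $x(t+1)=f(t,x(t))$, $x(0)=u_0$, is bounded on $\mathbb Z_+$. Then $\lim_{t\to+\infty}|\varphi(t+\tau,u_0,f)-\varphi(t,u_0,f)|=0$.
   Context: $C(\mathbb Z_+\times\mathbb R,\mathbb R)$ is the space of functions continuous in $x$, with the topology of uniform convergence on sets $\{t:|t|\le L\}\times K$, $K$ compact. $f^h(t,x)=f(t+h,x)$; $H^+(f)$ is the closure of $\{f^h:h\in\mathbb Z_+\}$. $f$ is asymptotically $\tau$-periodic: $f=P+R$ with $P(t+\tau,x)=P(t,x)$ and $R(t,x)\to0$ as $t\to\infty$ uniformly on compact $x$-sets. *)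

(* Defs.v *)
From HB Require Import structures.
From mathcomp Require Import all_boot all_order all_algebra.
From mathcomp Require Import all_classical all_reals all_analysis.
Set Implicit Arguments. Unset Strict Implicit. Unset Printing Implicit Defensive.
Import Order.TTheory GRing.Theory Num.Theory.
Import numFieldNormedType.Exports.
Local Open Scope classical_set_scope.
Local Open Scope ring_scope.

(* Functions Z_+ x R -> R are represented as nat -> R -> R. *)

Definition cont_in_x {R : realType} (f : nat -> R -> R) : Prop :=
  forall t : nat, continuous (f t).

Definition shiftf {R : realType} (f : nat -> R -> R) (h : nat) : nat -> R -> R :=
  fun t x => f (t + h)%N x.

(* g belongs to H^+(f): the closure of {f^h : h in Z_+} in C(Z_+ x R, R) with
   the topology of uniform convergence on {t : |t| <= L} x K, K compact;
   i.e. every basic neighbourhood of g meets the set of translates. *)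
Definition in_hull_plus {R : realType} (f g : nat -> R -> R) : Prop :=
  cont_in_x g /\
  forall (L : nat) (K : set R), compact K -> forall eps : R, 0 < eps ->
    exists h : nat, forall (t : nat) (x : R), (t <= L)%N -> K x ->
      `|shiftf f h t x - g t x| < eps.

Definition asympt_periodic {R : realType} (tau : nat) (f : nat -> R -> R) : Prop :=
  exists P Rm : nat -> R -> R,
    (forall t x, f t x = P t x + Rm t x) /\
    (forall t x, P (t + tau)%N x = P t x) /\
    (forall K : set R, compact K -> forall eps : R, 0 < eps ->
       exists T : nat, forall (t : nat) (x : R), (T <= t)%N -> K x ->
         `|Rm t x| < eps).

Fixpoint sol {R : realType} (f : nat -> R -> R) (u0 : R) (t : nat) : R :=
  match t with
  | 0%N => u0
  | t'.+1 => f t' (sol f u0 t')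
  end.

(* Main.v *)
Require Import Defs.
From HB Require Import structures.
From mathcomp Require Import all_boot all_order all_algebra.
From mathcomp Require Import all_classical all_reals all_analysis.
From mathcomp Require Import zify ring lra.
Import Order.TTheory GRing.Theory Num.Theory.
Import numFieldNormedType.Exports.
Local Open Scope classical_set_scope.
Local Open Scope ring_scope.


Set Implicit Arguments. Unset Strict Implicit.


Lemma up_piece (R : realType) (u : nat -> R) (G : nat -> R -> R) (eps p : R) :
  (forall m, u m.+1 = G m (u m)) ->
  (forall m v w, v <= w -> G m v <= G m w) ->
  (forall v (e : R), 0 < e -> exists N, forall m n, (N <= m)%N -> (N <= n)%N -> `|G m v - G n v| < e) ->
  0 < eps ->
  exists N, forall m, (N <= m)%N -> p <= u m <= p + eps / 4 -> u m.+1 - u m < eps.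
Proof.
move=> Hu Hm HC e0; set e := eps / 4.
have e0' : 0 < e by rewrite /e divr_gt0.
have epsE : eps = 4 * e by rewrite /e mulrC divfK // pnatr_eq0.
clearbody e.
apply: contrapT => Hn.
have Hbad : forall N, exists m, (N <= m)%N /\ p <= u m <= p + e /\ eps <= u m.+1 - u m.
  move=> N; apply: contrapT => HN; apply: Hn; exists N => m hm /andP [h1 h2].
  rewrite ltNge; apply/negP => h3; apply: HN; exists m; split => //; split => //.
  by apply/andP.
have [N1 HN1] := HC (p + e) e e0'.
have [n [hn [/andP [hu1 hu2] hu3]]] := Hbad N1.
have Gn : p + 4 * e <= G n (p + e).
  apply: (le_trans _ (Hm _ _ _ hu2)); rewrite -Hu; lra.
have Gm : forall m, (N1 <= m)%N -> p + 2 * e <= G m (p + 2 * e).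
  move=> m hm; have := HN1 m n hm hn; rewrite ltr_norml => /andP [h1 _].
  have : G m (p + e) <= G m (p + 2 * e) by apply: Hm; lra.
  lra.
have Hst : forall k, p + 2 * e <= u (n.+1 + k)%N.
  elim=> [|k IH]. rewrite addn0. clear -hu1 hu3 epsE e0'. lra.
  rewrite addnS Hu; apply: (le_trans (Gm (n.+1 + k)%N _)); first by lia.
  exact: Hm.
have [m [hm [/andP [hv1 hv2] _]]] := Hbad n.+1.
have := Hst (m - n.+1)%N; rewrite subnKC //; lra.
Qed.

Lemma up_all (R : realType) (u : nat -> R) (G : nat -> R -> R) (M eps : R) :
  (forall m, u m.+1 = G m (u m)) ->
  (forall m v w, v <= w -> G m v <= G m w) ->
  (forall v (e : R), 0 < e -> exists N, forall m n, (N <= m)%N -> (N <= n)%N -> `|G m v - G n v| < e) ->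
  (forall m, `|u m| <= M) ->
  0 < eps ->
  exists N, forall m, (N <= m)%N -> u m.+1 - u m < eps.
Proof.
move=> Hu Hm HC HM e0.
have e0' : 0 < eps / 4 by rewrite divr_gt0.
have Hk : forall K : nat, exists N, forall m, (N <= m)%N ->
    - M <= u m <= - M + K%:R * (eps / 4) -> u m.+1 - u m < eps.
  elim=> [|K [N1 HN1]].
    have [N HN] := @up_piece _ u G eps (- M) Hu Hm HC e0.
    exists N => m hm /andP [h1 h2]; apply: HN => //; apply/andP; split => //.
    rewrite mul0r addr0 in h2; lra.
  have [N2 HN2] := @up_piece _ u G eps (- M + K%:R * (eps / 4)) Hu Hm HC e0.
  exists (maxn N1 N2) => m hm /andP [h1 h2].
  have [h3|h3] := lerP (u m) (- M + K%:R * (eps / 4)).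
    apply: HN1; first by lia. by apply/andP.
  apply: HN2; first by lia. apply/andP; split; first lra.
  rewrite -natr1 mulrDl mul1r in h2; lra.
have M0 : 0 <= M by apply: le_trans (HM 0%N); exact: normr_ge0.
have b0 : 0 <= 2 * M / (eps / 4) by apply: divr_ge0 => //; [lra | lra].
have hb := archi_boundP b0.
have [N HN] := Hk (Num.Def.archi_bound (2 * M / (eps / 4))).
exists N => m hm; apply: HN => //.
have := HM m; rewrite ler_norml => /andP [h1 h2].
apply/andP; split => //.
rewrite ltr_pdivrMr // in hb. lra.
Qed.

Lemma updown (R : realType) (u : nat -> R) (G : nat -> R -> R) (M eps : R) :
  (forall m, u m.+1 = G m (u m)) ->
  (forall m v w, v <= w -> G m v <= G m w) ->
  (forall v (e : R), 0 < e -> exists N, forall m n, (N <= m)%N -> (N <= n)%N -> `|G m v - G n v| < e) ->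
  (forall m, `|u m| <= M) ->
  0 < eps ->
  exists N, forall m, (N <= m)%N -> `|u m.+1 - u m| < eps.
Proof.
move=> Hu Hm HC HM e0.
have [N1 H1] := @up_all _ u G M eps Hu Hm HC HM e0.
have Hu' : forall m, - u m.+1 = (fun m v => - G m (- v)) m (- u m) by move=> m /=; rewrite Hu opprK.
have Hm' : forall m v w, v <= w -> (fun m v => - G m (- v)) m v <= (fun m v => - G m (- v)) m w.
  by move=> m v w h /=; rewrite lerN2; apply: Hm; rewrite lerN2.
have HC' : forall v (e : R), 0 < e -> exists N, forall m n, (N <= m)%N -> (N <= n)%N ->
   `|(fun m v => - G m (- v)) m v - (fun m v => - G m (- v)) n v| < e.
  move=> v e he; have [N HN] := HC (- v) e he; exists N => m n a b /=.
  by rewrite opprK addrC; exact: HN.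
have HM' : forall m, `|- u m| <= M by move=> m; rewrite normrN.
have [N2 H2] := @up_all R (fun m => - u m) (fun m v => - G m (- v)) M eps Hu' Hm' HC' HM' e0.
exists (maxn N1 N2) => m hm; rewrite ltr_norml; apply/andP; split.
  have := H2 m ltac:(lia); lra.
apply: H1; lia.
Qed.




Fixpoint iterf {R : realType} (f : nat -> R -> R) (s i : nat) (v : R) : R :=
  match i with 0%N => v | i'.+1 => f (s + i')%N (@iterf R f s i' v) end.

Lemma in_seg {R : realType} {q w : R} : `|w - q| < 1 -> `[q - 1, q + 1]%classic w.
Proof.
rewrite ltr_norml => /andP [h1 h2] /=; rewrite in_itv /=; apply/andP; split; lra.
Qed.

Lemma P_cont (R : realType) (tau : nat) (f P Rm : nat -> R -> R) :
  (0 < tau)%N ->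
  (forall t, continuous (f t)) ->
  (forall t x, f t x = P t x + Rm t x) ->
  (forall t x, P (t + tau)%N x = P t x) ->
  (forall K : set R, compact K -> forall eps : R, 0 < eps ->
       exists T : nat, forall (t : nat) (x : R), (T <= t)%N -> K x -> `|Rm t x| < eps) ->
  forall s q (e : R), 0 < e -> exists2 d : R, 0 < d & forall w, `|w - q| < d -> `|P s w - P s q| < e.
Proof.
move=> tau0 fc fE Pp HR s q e e0.
have Pm : forall m t x, P (t + m * tau)%N x = P t x.
  elim=> [|m IH] t x; first by rewrite mul0n addn0.
  by rewrite mulSnr addnA Pp IH.
have e3 : 0 < e / 3 by rewrite divr_gt0.
have [T HT] := HR `[q - 1, q + 1]%classic (@segment_compact R (q - 1) (q + 1)) (e / 3) e3.
set t := (s + T * tau)%N.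
have tT : (T <= t)%N.
  rewrite /t; apply: leq_trans (leq_addl _ _); by rewrite leq_pmulr.
have [d d0 Hd] : exists2 d : R, 0 < d & forall w, `|w - q| < d -> `|f t w - f t q| < e / 3.
  have := fc t q.
  move/cvgrPdist_lt => /(_ (e / 3) e3) /nbhs_ballP [d d0 H].
  exists d => // w hw. rewrite distrC; apply: H.
  by rewrite /ball /= distrC.
exists (Num.min d 1); first by rewrite lt_min d0 ltr01.
move=> w; rewrite lt_min => /andP [hw1 hw2].
rewrite -(Pm T s w) -(Pm T s q) -/t.
have h1 := Hd w hw1.
have h2 := HT t w tT (in_seg hw2).
have h3 := HT t q tT (@in_seg R q q ltac:(by rewrite subrr normr0 ltr01)).
have -> : P t w - P t q = (f t w - f t q) - Rm t w + Rm t q by rewrite !fE; ring.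
apply: (le_lt_trans (ler_normD _ _)).
apply: (le_lt_trans (lerD (ler_normB _ _) (lexx _))).
have -> : e = e / 3 + e / 3 + e / 3 by field.
by rewrite ltrD // ltrD.
Qed.

Lemma P_mul (R : realType) (tau : nat) (P : nat -> R -> R) :
  (forall t x, P (t + tau)%N x = P t x) -> forall m t x, P (t + m * tau)%N x = P t x.
Proof.
move=> Pp; elim=> [|m IH] t x; first by rewrite mul0n addn0.
by rewrite mulSnr addnA Pp IH.
Qed.

Lemma iter_cvg (R : realType) (tau : nat) (f P Rm : nat -> R -> R) :
  (0 < tau)%N ->
  (forall t, continuous (f t)) ->
  (forall t x, f t x = P t x + Rm t x) ->
  (forall t x, P (t + tau)%N x = P t x) ->
  (forall K : set R, compact K -> forall eps : R, 0 < eps ->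
       exists T : nat, forall (t : nat) (x : R), (T <= t)%N -> K x -> `|Rm t x| < eps) ->
  forall j i v (e : R), 0 < e -> exists N, forall m, (N <= m)%N ->
    `|iterf f (m * tau + j) i v - iterf P j i v| < e.
Proof.
move=> tau0 fc fE Pp HR j i v; elim: i => [|i IH] e e0.
  by exists 0%N => m _ /=; rewrite subrr normr0.
set q := iterf P j i v.
have e2 : 0 < e / 2 by rewrite divr_gt0.
have [d d0 Hd] := P_cont tau0 fc fE Pp HR (j + i)%N q e2.
have d1 : 0 < Num.min d 1 by rewrite lt_min d0 ltr01.
have [N1 HN1] := IH _ d1.
have [T HT] := HR `[q - 1, q + 1]%classic (@segment_compact R (q - 1) (q + 1)) (e / 2) e2.
exists (maxn N1 T) => m hm /=.
set w := iterf f (m * tau + j) i v.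
have hw : `|w - q| < Num.min d 1 by apply: HN1; lia.
move: hw; rewrite lt_min => /andP [hw1 hw2].
have mt : (m <= m * tau)%N by rewrite leq_pmulr.
have h1 := Hd w hw1.
have h2 := HT (m * tau + j + i)%N w ltac:(lia) (in_seg hw2).
rewrite fE.
have -> : (m * tau + j + i = (j + i) + m * tau)%N by lia.
rewrite (P_mul Pp) -/q.
have -> : P (j + i)%N w + Rm (j + i + m * tau)%N w - P (j + i)%N q =
   (P (j + i)%N w - P (j + i)%N q) + Rm (j + i + m * tau)%N w by ring.
apply: (le_lt_trans (ler_normD _ _)).
have -> : e = e / 2 + e / 2 by field.
rewrite ltrD //.
by have -> : (j + i + m * tau = m * tau + j + i)%N by lia.
Qed.


Lemma cvg_eps (R : realType) (u : nat -> R) :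
  (forall e : R, 0 < e -> exists N, forall n, (N <= n)%N -> `|u n| < e) -> u @ \oo --> 0.
Proof.
move=> H; apply/cvgrPdist_lt => e e0.
have [N HN] := H e e0. exists N => // n /= hn. rewrite sub0r normrN. exact: HN.
Qed.

Lemma sol_iter (R : realType) (f : nat -> R -> R) u0 s i :
  sol f u0 (s + i) = iterf f s i (sol f u0 s).
Proof. by elim: i => [|i IH]; [rewrite addn0 | rewrite addnS /= IH]. Qed.

Lemma iter_mono (R : realType) (f : nat -> R -> R) :
  (forall t v w, v <= w -> f t v <= f t w) ->
  forall s i v w, v <= w -> iterf f s i v <= iterf f s i w.
Proof. by move=> fm s; elim=> [|i IH] v w h //=; apply: fm; apply: IH. Qed.

Unset Implicit Arguments.

Theorem mainTheorem18 (R : realType) (tau : nat) (f : nat -> R -> R) (u0 : R) :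
  cont_in_x f ->
  asympt_periodic tau f ->
  (forall g, in_hull_plus f g ->
     forall (t : nat) (v1 v2 : R), v1 < v2 -> g t v1 < g t v2) ->
  (exists M : R, forall t : nat, `|sol f u0 t| <= M) ->
  (fun t : nat => `|sol f u0 (t + tau)%N - sol f u0 t|) @ \oo --> (0 : R).
Proof.
move=> fc [P [Rm [fE [Pp HR]]]] Hmon [M HM].
apply: cvg_eps => e e0.
have [tau0|tau0] := posnP tau.
  by exists 0%N => n _; rewrite tau0 addn0 subrr normr0 normr0.
have hull : in_hull_plus f f.
  split => // L K _ eps e1; exists 0%N => t x _ _.
  by rewrite /shiftf addn0 subrr normr0.
have fmon : forall t v w, v <= w -> f t v <= f t w.
  move=> t v w; rewrite le_eqVlt => /orP [/eqP -> //|h].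
  exact/ltW/(Hmon f hull).
have Hj : forall j (e : R), 0 < e -> exists N, forall m, (N <= m)%N ->
    `|sol f u0 (m * tau + j + tau)%N - sol f u0 (m * tau + j)%N| < e.
  move=> j e' e'0.
  have Hu : forall m, sol f u0 (m.+1 * tau + j)%N =
      iterf f (m * tau + j) tau (sol f u0 (m * tau + j)%N).
    move=> m; rewrite -sol_iter; congr sol; rewrite mulSnr; lia.
  have HC : forall v (e : R), 0 < e -> exists N, forall m n, (N <= m)%N -> (N <= n)%N ->
      `|iterf f (m * tau + j) tau v - iterf f (n * tau + j) tau v| < e.
    move=> v e2 e20.
    have e22 : 0 < e2 / 2 by rewrite divr_gt0.
    have [N HN] := iter_cvg tau0 fc fE Pp HR j tau v e22.
    exists N => m n hm hn.
    have h1 := HN m hm; have h2 := HN n hn.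
    rewrite distrC in h2.
    have -> : e2 = e2 / 2 + e2 / 2 by field.
    apply: (le_lt_trans (ler_distD (iterf P j tau v) _ _)).
    by rewrite ltrD.
  have [N HN] := @updown R (fun m => sol f u0 (m * tau + j)%N)
     (fun m => iterf f (m * tau + j) tau) M e' Hu
     (fun m => iter_mono fmon (m * tau + j)%N tau) HC (fun m => HM _) e'0.
  exists N => m hm; have := HN m hm.
  by have -> : (m.+1 * tau + j = m * tau + j + tau)%N by rewrite mulSnr; lia.
have Hall : forall k, exists N, forall j m, (j < k)%N -> (N <= m)%N ->
    `|sol f u0 (m * tau + j + tau)%N - sol f u0 (m * tau + j)%N| < e.
  elim=> [|k [N1 HN1]]; first by exists 0%N.
  have [N2 HN2] := Hj k e e0.
  exists (maxn N1 N2) => j m hj hm.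
  have [hjk|hjk] := ltnP j k.
    apply: HN1 => //; lia.
  have -> : j = k by lia.
  apply: HN2; lia.
have [N HN] := Hall tau.
exists (N * tau)%N => t ht.
rewrite normr_id.
have ht' : (N <= t %/ tau)%N by rewrite leq_divRL.
have := HN (t %% tau)%N (t %/ tau)%N (ltn_pmod _ tau0) ht'.
by rewrite -divn_eq.
Qed.
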